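(* Let $A$ be a $*$-algebra with $*$-differential calculus $(\Omega,{\rm d},\wedge)$, let $\mathcal{S}$ be an $A$-bimodule, and let $\epsilon,\epsilon'\in\{1,-1\}$. Let $\mathcal{J}:\mathcal{S}\to\mathcal{S}$ be an antilinear map such that $\mathcal{J}(a.\phi)=\mathcal{J}(\phi).a^*$ and $\mathcal{J}(\phi.a)=a^*.\mathcal{J}(\phi)$ for all $a\in A,\phi\in\mathcal S$ (equivalently $j:\mathcal S\to\overline{\mathcal S}$, $j(\phi)=\overline{\mathcal J\phi}$, is a bimodule map) and $\mathcal{J}^2=\epsilon\,\mathrm{id}$. Let $(\nabla_{\mathcal{S}},\sigma_{\mathcal{S}})$ be a left bimodule connection on $\mathcal{S}$ with $\sigma_{\mathcal{S}}$ invertible, such that $(\mathrm{id}\otimes j)\nabla_{\mathcal{S}}=\nabla_{\overline{\mathcal{S}}}\circ j$, where $\nabla_{\overline{\mathcal S}}$ is the canonical left connection on $\overline{\mathcal S}$. Let $\triangleright:\Omega^1\otimes_A\mathcal{S}\to\mathcal{S}$ be an $A$-bimodule map such that $$\mathcal{J}(\xi\triangleright\phi)=\epsilon'\,\triangleright\big(\sigma_{\mathcal{S}}(\mathcal{J}\phi\otimes\xi^* )\big)\quad\text{for all }\xi\in\Omega^1,\ \phi\in\mathcal{S}$$ (in bimodule language $j\circ\triangleright=\epsilon'\,\overline{\triangleright\circ\sigma_{\mathcal S}}\,\Upsilon^{-1}(\star\otimes j)$). Put $D=\triangleright\circ\nabla_{\mathcal{S}}:\mathcal{S}\to\mathcal{S}$.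 Then: (a) $\mathcal J^2=\epsilon$; $a.(\mathcal{J}b\mathcal{J}^{-1}\phi)=\mathcal{J}b\mathcal{J}^{-1}(a.\phi)$ for all $a,b\in A$; $\mathcal{J}D=\epsilon' D\mathcal{J}$; and $[[D,a],\mathcal{J}b\mathcal{J}^{-1}]=0$ for all $a,b\in A$ (the algebraic conditions of an odd real spectral triple). (b) If moreover there is an $A$-bimodule map $\gamma:\mathcal{S}\to\mathcal{S}$ with $\gamma^2=\mathrm{id}$, $\nabla_{\mathcal{S}}\gamma=(\mathrm{id}\otimes\gamma)\nabla_{\mathcal{S}}$, $\gamma\circ\triangleright=-\triangleright\circ(\mathrm{id}\otimes\gamma)$ and $\mathcal{J}\gamma=\epsilon''\gamma\mathcal{J}$ for a sign $\epsilon''$, then in addition $\gamma$ commutes with the left action of $A$, $\mathcal J\gamma=\epsilon''\gamma\mathcal J$ and $D\gamma=-\gamma D$ (the algebraic conditions of an even real spectral triple).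
   Context: Elements of $A$ act on $\mathcal S$ by left multiplication and are identified with these operators; $[D,a]$ is the commutator. Left bimodule connection: a linear $\nabla_{\mathcal S}:\mathcal S\to\Omega^1\otimes_A\mathcal S$ with $\nabla_{\mathcal S}(a.\phi)={\rm d}a\otimes\phi+a.\nabla_{\mathcal S}\phi$, together with a bimodule map $\sigma_{\mathcal S}:\mathcal S\otimes_A\Omega^1\to\Omega^1\otimes_A\mathcal S$ with $\sigma_{\mathcal S}(\phi\otimes{\rm d}a)=\nabla_{\mathcal S}(\phi.a)-\nabla_{\mathcal S}(\phi).a$. Conjugate bimodule: for an $A$-bimodule $E$, $\overline E$ is the set $\{\overline e: e\in E\}$ with $\overline e+\overline f=\overline{e+f}$, $\lambda\overline e=\overline{\lambda^* e}$ ($\lambda\in\mathbb C$), $a.\overline e=\overline{e.a^*}$, $\overline e.a=\overline{a^*.e}$. For a bimodule map $\theta$, $\overline\theta(\overline e)=\overline{\theta(e)}$. $\Upsilon:\overline{E\otimes_AF}\to\overline F\otimes_A\overline E$, $\Upsilon(\overline{e\otimes f})=\overline f\otimes\overline e$. $\star:\Omega\to\overline\Omega$, $\star\xi=\overline{\xi^*}$. The canonical left connection on $\overline{\mathcal S}$ is $\nabla_{\overline{\mathcal S}}(\overline\phi)=(\star^{-1}\otimes\mathrm{id})\Upsilon\,\overline{\sigma_{\mathcal S}^{-1}\nabla_{\mathcal S}\phi}$. *)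

(* Defs.v *)
From HB Require Import structures.
From mathcomp Require Import all_boot all_order all_algebra.
Set Implicit Arguments. Unset Strict Implicit. Unset Printing Implicit Defensive.
Import Order.TTheory GRing.Theory Num.Theory.
Local Open Scope ring_scope.

Section Defs.
Variables (C : numClosedFieldType) (A : algType C).

Definition is_sign (e : C) : Prop := e = 1 \/ e = -1.

Definition additive_map (M N : zmodType) (f : M -> N) : Prop :=
  forall x y, f (x + y) = f x + f y.

Definition star_algebra (star : A -> A) : Prop :=
  (forall a b, star (a + b) = star a + star b) /\ (forall (c : C) a, star (c *: a) = c^* *: star a) /\ (forall a b, star (a * b) = star b * star a) /\ (forall a, star (star a) = a).

(* A complex A-bimodule: a Z-module with a left and a right action of A,
   bi-additive, associative, unital, commuting, and such that the left and
   right actions of scalars c%:A agree (this is the complex vector space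
   structure: c.m := c%:A . m). *)
Definition bimodule (M : zmodType) (l : A -> M -> M) (r : M -> A -> M) : Prop :=
  (((forall a m n, l a (m + n) = l a m + l a n)) /\ ((forall a b m, l (a + b) m = l a m + l b m)) /\ ((forall a b m, l (a * b) m = l a (l b m))) /\ ((forall m, l 1 m = m)) /\ ((forall a m n, r (m + n) a = r m a + r n a)) /\ ((forall a b m, r m (a + b) = r m a + r m b)) /\ ((forall a b m, r m (a * b) = r (r m a) b)) /\ ((forall m, r m 1 = m)) /\ ((forall a b m, r (l a m) b = l a (r m b))) /\ ((forall (c : C) m, l (c%:A) m = r m (c%:A)))).

Definition bimod_map (M : zmodType) (lM : A -> M -> M) (rM : M -> A -> M)
    (N : zmodType) (lN : A -> N -> N) (rN : N -> A -> N) (f : M -> N) : Prop :=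
  ((additive_map f) /\ ((forall a m, f (lM a m) = lN a (f m))) /\ ((forall a m, f (rM m a) = rN (f m) a))).

(* (T, lT, rT, tens) is the tensor product M (x)_A N of bimodules, given by
   the universal property of balanced biadditive maps. *)
Definition is_tensor (M : zmodType) (lM : A -> M -> M) (rM : M -> A -> M)
    (N : zmodType) (lN : A -> N -> N) (rN : N -> A -> N)
    (T : zmodType) (lT : A -> T -> T) (rT : T -> A -> T) (tens : M -> N -> T) : Prop :=
  ((bimodule lT rT) /\ ((forall m1 m2 n, tens (m1 + m2) n = tens m1 n + tens m2 n)) /\ ((forall m n1 n2, tens m (n1 + n2) = tens m n1 + tens m n2)) /\ ((forall m a n, tens (rM m a) n = tens m (lN a n))) /\ ((forall a m n, lT a (tens m n) = tens (lM a m) n)) /\ ((forall a m n, rT (tens m n) a = tens m (rN n a))) /\ ((forall (G : zmodType) (f : M -> N -> G),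
          (forall m1 m2 n, f (m1 + m2) n = f m1 n + f m2 n) ->
          (forall m n1 n2, f m (n1 + n2) = f m n1 + f m n2) ->
          (forall m a n, f (rM m a) n = f m (lN a n)) ->
          exists g : T -> G, additive_map g /\ forall m n, g (tens m n) = f m n)) /\ ((forall (G : zmodType) (g1 g2 : T -> G), additive_map g1 -> additive_map g2 ->
          (forall m n, g1 (tens m n) = g2 (tens m n)) -> forall t, g1 t = g2 t))).

(* Conjugate bimodule structure on the same carrier: a.(bar m) = bar(m.a^* ),
   (bar m).a = bar(a^* .m); the carrier element m represents bar m. *)
Definition conj_l (star : A -> A) (M : zmodType) (r : M -> A -> M) : A -> M -> M :=
  fun a m => r m (star a).
Definition conj_r (star : A -> A) (M : zmodType) (l : A -> M -> M) : M -> A -> M :=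
  fun m a => l (star a) m.

(* First order part of a *-differential calculus: Omega^1 bimodule, d : A -> Omega^1
   linear with Leibniz rule, Omega^1 spanned by a.db, and a * on Omega^1
   compatible with d and the bimodule structure, involutive. *)
Definition star_calculus1 (star : A -> A)
    (O : zmodType) (lO : A -> O -> O) (rO : O -> A -> O) (d : A -> O) (starO : O -> O) : Prop :=
  ((bimodule lO rO) /\ ((forall a b, d (a + b) = d a + d b)) /\ ((forall (c : C) a, d (c *: a) = lO (c%:A) (d a))) /\ ((forall a b, d (a * b) = rO (d a) b + lO a (d b))) /\ ((forall xi : O, exists s : seq (A * A), xi = \sum_(p <- s) lO p.1 (d p.2))) /\ (additive_map starO) /\ ((forall a xi, starO (lO a xi) = rO (starO xi) (star a))) /\ ((forall a xi, starO (rO xi a) = lO (star a) (starO xi))) /\ ((forall xi, starO (starO xi) = xi)) /\ ((forall a, starO (d a) = d (star a)))).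

Definition left_bimod_connection
    (O : zmodType) (lO : A -> O -> O) (rO : O -> A -> O) (d : A -> O)
    (S : zmodType) (lS : A -> S -> S) (rS : S -> A -> S)
    (T1 : zmodType) (l1 : A -> T1 -> T1) (r1 : T1 -> A -> T1) (tens1 : O -> S -> T1)
    (T2 : zmodType) (l2 : A -> T2 -> T2) (r2 : T2 -> A -> T2) (tens2 : S -> O -> T2)
    (nabla : S -> T1) (sigma : T2 -> T1) : Prop :=
  ((additive_map nabla) /\ ((forall (c : C) phi, nabla (lS (c%:A) phi) = l1 (c%:A) (nabla phi))) /\ ((forall a phi, nabla (lS a phi) = tens1 (d a) phi + l1 a (nabla phi))) /\ (bimod_map l2 r2 l1 r1 sigma) /\ ((forall phi a, sigma (tens2 phi (d a)) = nabla (rS phi a) - r1 (nabla phi) a))).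

End Defs.

(* Main.v *)
Require Import Defs.
From HB Require Import structures.
From mathcomp Require Import all_boot all_order all_algebra.
Import Order.TTheory GRing.Theory Num.Theory.
Local Open Scope ring_scope.

Theorem mainTheorem4
  (C : numClosedFieldType) (A : algType C) (star : A -> A)
  (* Omega^1, d, * *)
  (O : zmodType) (lO : A -> O -> O) (rO : O -> A -> O) (d : A -> O) (starO : O -> O)
  (* the bimodule S *)
  (S : zmodType) (lS : A -> S -> S) (rS : S -> A -> S)
  (* T1 = Omega^1 (x)_A S *)
  (T1 : zmodType) (l1 : A -> T1 -> T1) (r1 : T1 -> A -> T1) (tens1 : O -> S -> T1)
  (* T2 = S (x)_A Omega^1 *)
  (T2 : zmodType) (l2 : A -> T2 -> T2) (r2 : T2 -> A -> T2) (tens2 : S -> O -> T2)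
  (* T3 = Omega^1 (x)_A conj(S) *)
  (T3 : zmodType) (l3 : A -> T3 -> T3) (r3 : T3 -> A -> T3) (tens3 : O -> S -> T3)
  (eps eps' : C) (J : S -> S) (nabla : S -> T1) (sigma : T2 -> T1) (tr : T1 -> S) :
  star_algebra star ->
  star_calculus1 star lO rO d starO ->
  bimodule lS rS ->
  is_tensor lO rO lS rS l1 r1 tens1 ->
  is_tensor lS rS lO rO l2 r2 tens2 ->
  is_tensor lO rO (conj_l star rS) (conj_r star lS) l3 r3 tens3 ->
  is_sign eps -> is_sign eps' ->
  (* J antilinear with J(a.phi) = J(phi).a^*, J(phi.a) = a^*.J(phi), J^2 = eps *)
  additive_map J ->
  (forall a phi, J (lS a phi) = rS (J phi) (star a)) ->
  (forall a phi, J (rS phi a) = lS (star a) (J phi)) ->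
  (forall phi, J (J phi) = lS (eps%:A) phi) ->
  (* left bimodule connection with sigma invertible *)
  left_bimod_connection lO rO d lS rS l1 r1 tens1 l2 r2 tens2 nabla sigma ->
  bijective sigma ->
  (* (id (x) j) nabla = nabla_{conj S} o j, where
     nabla_{conj S}(bar phi) = (star^-1 (x) id) Upsilon bar(sigma^-1 nabla phi);
     idj is id (x) j, and Psi is (star^-1 (x) id) Upsilon on pure tensors:
     bar(phi (x) xi) |-> xi^* (x) bar phi *)
  (forall (idj : T1 -> T3) (Psi : T2 -> T3),
      additive_map idj -> additive_map Psi ->
      (forall xi phi, idj (tens1 xi phi) = tens3 xi (J phi)) ->
      (forall phi xi, Psi (tens2 phi xi) = tens3 (starO xi) phi) ->
      forall psi t, sigma t = nabla (J psi) -> idj (nabla psi) = Psi t) ->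
  (* triangleright is a bimodule map with the J-compatibility *)
  bimod_map l1 r1 lS rS tr ->
  (forall xi phi, J (tr (tens1 xi phi))
                  = lS (eps'%:A) (tr (sigma (tens2 (J phi) (starO xi))))) ->
  let D := fun phi => tr (nabla phi) in
  (* (a) *)
  ((forall phi, J (J phi) = lS (eps%:A) phi) /\
   (forall Ji : S -> S, cancel J Ji -> cancel Ji J ->
      ((forall a b phi, lS a (J (lS b (Ji phi))) = J (lS b (Ji (lS a phi)))) /\
          (forall phi, J (D phi) = lS (eps'%:A) (D (J phi)))
        /\ (forall a b phi,
             let Da := fun psi => D (lS a psi) - lS a (D psi) in
             let Jb := fun psi => J (lS b (Ji psi)) in
             Da (Jb phi) - Jb (Da phi) = 0)))) /\
  (* (b) *)
  (forall (gamma : S -> S) (eps'' : C),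
     is_sign eps'' ->
     bimod_map lS rS lS rS gamma ->
     (forall phi, gamma (gamma phi) = phi) ->
     (forall idg : T1 -> T1, additive_map idg ->
        (forall xi phi, idg (tens1 xi phi) = tens1 xi (gamma phi)) ->
        (forall phi, nabla (gamma phi) = idg (nabla phi)) /\
        (forall t, gamma (tr t) = - tr (idg t))) ->
     (forall phi, J (gamma phi) = lS (eps''%:A) (gamma (J phi))) ->
     ((forall a phi, gamma (lS a phi) = lS a (gamma phi)) /\
         (forall phi, J (gamma phi) = lS (eps''%:A) (gamma (J phi))) /\
         (forall phi, D (gamma phi) = - gamma (D phi)))).
Proof.
move=> Hstar Hcal HS HT1 HT2 HT3 Heps Heps' HJadd HJl HJr HJJ Hcon Hsig Hnab Htr HtrJ D.
case: Hstar => sadd [sscal [smul sinv]].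
case: Hcal => HO [dadd [dscal [dleib [dspan [stOadd [stOl [stOr [stOO stOd]]]]]]]].
case: HS => lSadd [lSadd2 [lSmul [lS1 [rSadd [rSadd2 [rSmul [rS1 [lrS lrC]]]]]]]].
case: HT1 => HT1b [t1addl [t1addr [t1bal [t1l [t1r [t1univ t1uniq]]]]]].
case: HT2 => HT2b [t2addl [t2addr [t2bal [t2l [t2r [t2univ t2uniq]]]]]].
case: HT3 => HT3b [t3addl [t3addr [t3bal [t3l [t3r [t3univ t3uniq]]]]]].
case: Hcon => nabadd [nabC [nabl [[sigadd [sigl sigr]] sigd]]].
case: Htr => tradd [trl trr].
split.
- split; first exact HJJ.
  move=> Ji JK JiK.
  have HJb : forall b psi, J (lS b (Ji psi)) = rS psi (star b).
    by move=> b psi; rewrite HJl JiK.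
  split.
    by move=> a b phi; rewrite !HJb lrS.
  split.
  + have [idj [idjadd idjE]] : exists g : T1 -> T3, additive_map g /\
        forall m n, g (tens1 m n) = tens3 m (J n).
      apply: t1univ => [m1 m2 n|m n1 n2|m a n] /=.
      * by rewrite t3addl.
      * by rewrite HJadd t3addr.
      * by rewrite HJl t3bal.
    have [Psi [Psiadd PsiE]] : exists g : T2 -> T3, additive_map g /\
        forall m n, g (tens2 m n) = tens3 (starO n) m.
      apply: t2univ => [m1 m2 n|m n1 n2|m a n] /=.
      * by rewrite t3addr.
      * by rewrite stOadd t3addl.
      * by rewrite stOl t3bal /conj_l sinv.
    have [h [hadd hE]] : exists g : T3 -> S, additive_map g /\
        forall m n, g (tens3 m n) = tr (sigma (tens2 n (starO m))).
      apply: t3univ => [m1 m2 n|m n1 n2|m a n] /=.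
      * by rewrite stOadd t2addr sigadd tradd.
      * by rewrite t2addl sigadd tradd.
      * by rewrite stOr /conj_l t2bal.
    have E1 : forall x, J (tr x) = lS (eps'%:A) (h (idj x)).
      apply: (t1uniq S (fun x => J (tr x)) (fun x => lS (eps'%:A) (h (idj x)))).
      * by move=> x y /=; rewrite tradd HJadd.
      * by move=> x y /=; rewrite idjadd hadd lSadd.
      * by move=> xi phi /=; rewrite HtrJ idjE hE.
    have E2 : forall t, h (Psi t) = tr (sigma t).
      apply: (t2uniq S (fun x => h (Psi x)) (fun x => tr (sigma x))).
      * by move=> x y /=; rewrite Psiadd hadd.
      * by move=> x y /=; rewrite sigadd tradd.
      * by move=> phi xi /=; rewrite PsiE hE stOO.
    case: Hsig => sinvf sK Ks.
    move=> phi; rewrite /D E1.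
    by rewrite (Hnab idj Psi idjadd Psiadd idjE PsiE phi (sinvf (nabla (J phi))) (Ks _)) E2 Ks.
  + have HDa : forall a psi, D (lS a psi) - lS a (D psi) = tr (tens1 (d a) psi).
      by move=> a psi; rewrite /D nabl tradd trl addrK.
    move=> a b phi Da Jb; rewrite /Da /Jb !HJb !HDa.
    by rewrite -t1r trr subrr.
- move=> gamma e'' He'' [gadd [gl gr]] gg Hg HJg.
  split; first exact gl.
  split; first exact HJg.
  have [idg [idgadd idgE]] : exists g : T1 -> T1, additive_map g /\
      forall m n, g (tens1 m n) = tens1 m (gamma n).
    apply: t1univ => [m1 m2 n|m n1 n2|m a n] /=.
    * by rewrite t1addl.
    * by rewrite gadd t1addr.
    * by rewrite gl t1bal.
  have [H1 H2] := Hg idg idgadd idgE.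
  by move=> phi; rewrite /D H1 H2 opprK.
Qed.
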